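(* Let $\Omega$ be a set and let $G=H\times K\leq{\rm Sym}(\Omega)$ be a finite transitive group which is the internal direct product of subgroups $H$ and $K$ with $\gcd(|H|,|K|)=1$. Let $\alpha\in\Omega$ (so $\Omega=\alpha^G$), $\Omega_1=\alpha^H$ and $\Omega_2=\alpha^K$. Then $G$ acts on $\Omega_1\times\Omega_2$ by the rule $(\alpha^h,\alpha^k)^g=(\alpha^{hh_1},\alpha^{kk_1})$ for $h\in H$, $k\in K$ and $g=h_1k_1$ with $h_1\in H$, $k_1\in K$, and the action of $G$ on $\Omega$ is equivalent to this action of $G$ on $\Omega_1\times\Omega_2$.
   Context: Permutations act on the right; $\alpha^X$ denotes the orbit of $\alpha$ under $X$. Two actions of $G$ on sets $\Omega$ and $\Delta$ are equivalent if there is a bijection $\lambda:\Omega\to\Delta$ with $\lambda(\beta^x)=\lambda(\beta)^x$ for all $\beta\in\Omega$, $x\in G$. *)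

(* Defs.v *)
From mathcomp Require Import all_boot all_fingroup.
Set Implicit Arguments. Unset Strict Implicit. Unset Printing Implicit Defensive.

(* Main.v *)
Require Import Defs.
From mathcomp Require Import all_boot all_fingroup all_solvable.
Import GroupScope.

Lemma fixH (T : finType) (H K : {group {perm T}}) (alpha : T) x y :
  coprime #|H| #|K| -> x \in H -> y \in K -> commute x y ->
  (x * y) alpha = alpha -> x alpha = alpha.
Proof.
move=> cop xH yK cxy e.
have sC : x * y \in 'C[alpha | 'P] by apply/astab1P.
set pi := \pi(#[x]).
have : (x * y).`_pi \in 'C[alpha | 'P].
  by apply: (subsetP _ _ (cycle_constt pi (x * y))); rewrite cycle_subG.
rewrite consttM // constt_p_elt; last exact: pnat_pi (order_gt0 x).
have -> : y.`_pi = 1.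
  apply/constt1P; rewrite /p_elt -coprime_pi' ?order_gt0 //.
  exact: coprime_dvdl (order_dvdG xH) (coprime_dvdr (order_dvdG yK) cop).
by rewrite mulg1 => /astab1P.
Qed.

Arguments fixH {T H K alpha x y}.

Theorem mainTheorem14 (T : finType) (G H K : {group {perm T}}) (alpha : T) :
  H \x K = G ->
  coprime #|H| #|K| ->
  [transitive G, on [set: T] | 'P] ->
  (forall h h' k k' h1 h1' k1 k1',
      h \in H -> h' \in H -> k \in K -> k' \in K ->
      h1 \in H -> h1' \in H -> k1 \in K -> k1' \in K ->
      (h alpha, k alpha) = (h' alpha, k' alpha) ->
      h1 * k1 = h1' * k1' ->
      ((h * h1) alpha, (k * k1) alpha) = ((h' * h1') alpha, (k' * k1') alpha))
  /\
  (forall h k h1 k1, h \in H -> k \in K -> h1 \in H -> k1 \in K ->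
      h1 * k1 \in G /\
      ((h * h1) alpha \in orbit 'P H alpha) /\ ((k * k1) alpha \in orbit 'P K alpha))
  /\
  exists lam : T -> T * T,
    [/\ injective lam,
        (forall b, lam b \in setX (orbit 'P H alpha) (orbit 'P K alpha)),
        (forall p, p \in setX (orbit 'P H alpha) (orbit 'P K alpha) ->
           exists b, lam b = p) &
        (forall b h k h1 k1, h \in H -> k \in K -> h1 \in H -> k1 \in K ->
           lam b = (h alpha, k alpha) ->
           lam ((h1 * k1) b) = ((h * h1) alpha, (k * k1) alpha))].
Proof.
move=> hG cop tr.
have [_ eHK cHK tiHK] := dprodP hG.
have comm h k : h \in H -> k \in K -> commute h k.
  by move=> hH kK; apply/esym; exact: (centsP cHK k kK h hH).
split.
  move=> h h' k k' h1 h1' k1 k1' hH h'H kK k'K h1H h1'H k1K k1'K [e1 e2] e.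
  have ee : h1'^-1 * h1 = k1' * k1^-1.
    by apply: (mulgI h1'); rewrite mulKVg mulgA -e mulgK.
  have : h1'^-1 * h1 \in H :&: K.
    by rewrite inE groupM ?groupV //= ee groupM ?groupV.
  rewrite tiHK => /set1gP e3.
  have eh : h1 = h1' by rewrite -(mulKVg h1' h1) e3 mulg1.
  have ek : k1 = k1' by move: e; rewrite eh => /mulgI.
  by rewrite eh ek !permM e1 e2.
split.
  move=> h k h1 k1 hH kK h1H k1K; split; first by rewrite -eHK mem_mulg.
  by split; apply/orbitP; [exists (h * h1) | exists (k * k1)]; rewrite ?groupM.
have key h h' k k' : h \in H -> h' \in H -> k \in K -> k' \in K ->
    (h * k) alpha = (h' * k') alpha -> h alpha = h' alpha /\ k alpha = k' alpha.
  move=> hH h'H kK k'K e.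
  set x := h * h'^-1; set y := k * k'^-1.
  have xH : x \in H by rewrite groupM ?groupV.
  have yK : y \in K by rewrite groupM ?groupV.
  have exy : x * y = (h * k) * (h' * k')^-1.
    rewrite /x /y invMg -!mulgA; congr (_ * _); rewrite [RHS]mulgA.
    by rewrite (comm h'^-1 (k * k'^-1)) ?groupM ?groupV.
  have fx : (x * y) alpha = alpha by rewrite exy permM e -permM mulgV perm1.
  have fy : (y * x) alpha = alpha by rewrite -(comm _ _ xH yK).
  have [cxy cyx] : commute x y /\ commute y x by split; [|apply/esym]; apply: comm.
  have e1 := fixH cop xH yK cxy fx.
  have cop' : coprime #|K| #|H| by rewrite coprime_sym.
  have e2 := fixH cop' yK xH cyx fy.
  move: e1 e2; rewrite /x /y !permM => e1 e2.
  split; [rewrite -[LHS](permK h'^-1) e1 invgK | rewrite -[LHS](permK k'^-1) e2 invgK];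
    by [].
have dec b : exists h k, [/\ h \in H, k \in K & b = (h * k) alpha].
  have [g gG ->] := atransP2 tr (in_setT alpha) (in_setT b).
  move: gG; rewrite -eHK => /mulsgP[h k hH kK ->].
  by exists h, k.
pose lam b := if [pick hk | (hk.1 \in H) && (hk.2 \in K) && ((hk.1 * hk.2) alpha == b)]
  is Some hk then (hk.1 alpha, hk.2 alpha) else (alpha, alpha).
have lamE h k : h \in H -> k \in K -> lam ((h * k) alpha) = (h alpha, k alpha).
  move=> hH kK; rewrite /lam; case: pickP => [[h' k'] /= /andP[/andP[h'H k'K] /eqP e] | none].
    by have [-> ->] := key _ _ _ _ h'H hH k'K kK e.
  by move: (none (h, k)); rewrite /= hH kK eqxx.
have back h h' k k' : h \in H -> h' \in H -> k \in K -> k' \in K ->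
    h alpha = h' alpha -> k alpha = k' alpha -> (h * k) alpha = (h' * k') alpha.
  move=> hH h'H kK k'K e1 e2.
  rewrite permM e1 -permM (comm _ _ h'H kK) permM e2 -permM -(comm _ _ h'H k'K).
  by [].
exists lam; split.
- move=> b1 b2; have [h1 [k1 [h1H k1K ->]]] := dec b1.
  have [h2 [k2 [h2H k2K ->]]] := dec b2.
  rewrite !lamE // => -[e1 e2]; exact: back.
- move=> b; have [h [k [hH kK ->]]] := dec b.
  by rewrite lamE // inE /=; apply/andP; split; apply/orbitP; [exists h | exists k].
- case=> p1 p2; rewrite inE /= => /andP[/orbitP[h hH <-] /orbitP[k kK <-]].
  by exists ((h * k) alpha); rewrite lamE.
- move=> b h k h1 k1 hH kK h1H k1K.
  have [h' [k' [h'H k'K ->]]] := dec b.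
  rewrite lamE // => -[e1 e2].
  rewrite (back h' h k' k) // -permM.
  have -> : h * k * (h1 * k1) = (h * h1) * (k * k1).
    by rewrite -!mulgA; congr (_ * _); rewrite !mulgA (comm _ _ h1H kK).
  by rewrite lamE ?groupM.
Qed.
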